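(* Let $h,h'\in\mathbf N$, $w=x_1\cdots x_k\in\{x,y\}^*$, $s$ a right-infinite and $s'$ a left-infinite word over $\{x,y\}$ such that ${}^ts=s'\,x\,y^{h'}\,x\,w$ and ${}^ts'=w\,y\,x^h\,y\,s$, and suppose the frontier $f=s'\,x y^{h'} x\,w\,y x^h y\,s$ is admissible. Embed $f$ and let $t$ be the $SL_2$-tiling with values in $\mathbf N$ extending it. Let $P_0,\dots,P_k$ be the successive path points along the factor $w$ (so $P_0$ precedes $x_1$, $P_j$ lies between $x_j$ and $x_{j+1}$, $P_k$ follows $x_k$), and $b(j,n)=t(P_j+n(1,-1))$. Let $I$ be the path point between $x^h$ and the following $y$ in $yx^hy$, $I'$ the path point between the first $x$ and $y^{h'}$ in $xy^{h'}x$, $J=I+(0,-1)$, $K=I+(0,-2)$, $J'=I'+(1,0)$, $K'=I'+(2,0)$, and put $i_n=t(I+n(1,0))$, $i'_n=t(I'+n(0,-1))$, $j_n=t(J+n(1,-1))$, $k_n=t(K+n(1,-1))$, $j'_n=t(J'+n(1,-1))$, $k'_n=t(K'+n(1,-1))$. Then for all $n\in\mathbf N$: $j_n=(h+1)i_n^2$, $k_n+1=(h+1)i_ni_{n+1}$, $j'_n=(h'+1){i'_n}^2$, $k'_n+1=(h'+1)i'_ni'_{n+1}$; and for $j=1,\dots,k-1$, $b(j,n)b(j,n+1)=1+B$ where $B=b(j-1,n+1)b(j+1,n)$ if $x_jx_{j+1}=xx$; $B=b(j-1,n+1)b(j+1,n+1)$ if $x_jx_{j+1}=xy$; $B=b(j-1,n)b(j+1,n)$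 if $x_jx_{j+1}=yx$; $B=b(j-1,n)b(j+1,n+1)$ if $x_jx_{j+1}=yy$.
   Context: Cartesian coordinates on $\mathbf Z^2$. The transpose ${}^tw$ of a word reverses it and exchanges $x$ and $y$ (transposes of right-infinite words are left-infinite and vice versa). A frontier is a bi-infinite word over $\{x,y\}$, admissible if neither half is ultimately constant; it is embedded as lattice points with each letter $x$ a step $(1,0)$ and each letter $y$ a step $(0,1)$. The extending $SL_2$-tiling is the unique $t:\mathbf Z^2\to\mathbf N$ with $t(a,b+1)t(a+1,b)-t(a,b)t(a+1,b+1)=1$ for all $(a,b)$ and $t=1$ on the path points. *)

(* Defs.v *)
From Stdlib Require Import ZArith List.
Import ListNotations.
Open Scope Z_scope.

Inductive letter := X | Y.

Definition swap (l : letter) : letter := match l with X => Y | Y => X end.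

Definition rword := nat -> letter.
(* left-infinite word: index 0 is the LAST letter, index 1 the one before, ... *)
Definition lword := nat -> letter.

(* transpose: reverse and exchange x,y *)
Definition tr_r (s : rword) : lword := fun m => swap (s m).
Definition tr_l (s : lword) : rword := fun m => swap (s m).

(* left-infinite word s followed by finite word u *)
Definition lcat (s : lword) (u : list letter) : lword :=
  fun m => if Nat.ltb m (length u) then nth (length u - 1 - m)%nat u X
           else s (m - length u)%nat.
Definition rcat (u : list letter) (s : rword) : rword :=
  fun m => if Nat.ltb m (length u) then nth m u X else s (m - length u)%nat.

Definition frontier := Z -> letter.

(* L R: positions < 0 are L (position -1 = last letter of L), positions >= 0 are R *)
Definition join (L : lword) (R : rword) : frontier :=
  fun i => if i <? 0 then L (Z.to_nat (- i - 1)) else R (Z.to_nat i).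

Definition ult_const_right (f : frontier) : Prop :=
  exists N, forall i, N <= i -> f i = f N.
Definition ult_const_left (f : frontier) : Prop :=
  exists N, forall i, i <= N -> f i = f N.
Definition admissible (f : frontier) : Prop :=
  ~ ult_const_right f /\ ~ ult_const_left f.

Definition step (l : letter) : Z * Z := match l with X => (1, 0) | Y => (0, 1) end.
Definition padd (P v : Z * Z) : Z * Z := (fst P + fst v, snd P + snd v).
Definition psub (P v : Z * Z) : Z * Z := (fst P - fst v, snd P - snd v).

(* Embedding: path f i is the lattice point just before the letter at position i
   (and just after the letter at position i-1); path f 0 = (0,0). *)
Fixpoint pos_path (f : frontier) (n : nat) : Z * Z :=
  match n with
  | O => (0, 0)
  | S n => padd (pos_path f n) (step (f (Z.of_nat n)))
  end.
Fixpoint neg_path (f : frontier) (n : nat) : Z * Z :=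
  match n with
  | O => (0, 0)
  | S n => psub (neg_path f n) (step (f (- Z.of_nat n - 1)))
  end.
Definition path (f : frontier) (i : Z) : Z * Z :=
  if 0 <=? i then pos_path f (Z.to_nat i) else neg_path f (Z.to_nat (- i)).

Definition SL2_tiling (t : Z * Z -> nat) : Prop :=
  forall a b : Z, Nat.mul (t (a, b + 1)) (t (a + 1, b)) = Nat.add 1 (Nat.mul (t (a, b)) (t (a + 1, b + 1))).

Definition extends (t : Z * Z -> nat) (f : frontier) : Prop :=
  forall i, t (path f i) = 1%nat.

(* Main.v *)
Require Import Defs.
From Stdlib Require Import ZArith List Lia Classical.
Import ListNotations.
Open Scope Z_scope.

Record mat := Mat { a11 : Z; a12 : Z; a21 : Z; a22 : Z }.
Definition mmul (A B : mat) : mat :=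
  Mat (a11 A * a11 B + a12 A * a21 B) (a11 A * a12 B + a12 A * a22 B)
      (a21 A * a11 B + a22 A * a21 B) (a21 A * a12 B + a22 A * a22 B).
Definition mtr (A : mat) : mat := Mat (a11 A) (a21 A) (a12 A) (a22 A).
Definition mdet (A : mat) : Z := a11 A * a22 A - a12 A * a21 A.
Definition mid : mat := Mat 1 0 0 1.
Definition ML (l : letter) : mat :=
  match l with X => Mat 1 1 0 1 | Y => Mat 1 0 1 1 end.
Fixpoint seg (f : frontier) (p : Z) (n : nat) : mat :=
  match n with O => mid | S n => mmul (ML (f p)) (seg f (p + 1) n) end.

Lemma mmul_assoc A B C : mmul A (mmul B C) = mmul (mmul A B) C.
Proof. destruct A, B, C; unfold mmul, mid; cbn [a11 a12 a21 a22]; f_equal; ring. Qed.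
Lemma mmul_id_r A : mmul A mid = A.
Proof. destruct A; unfold mmul, mid; cbn [a11 a12 a21 a22]; f_equal; ring. Qed.
Lemma mmul_id_l A : mmul mid A = A.
Proof. destruct A; unfold mmul, mid; cbn [a11 a12 a21 a22]; f_equal; ring. Qed.
Lemma mtr_mul A B : mtr (mmul A B) = mmul (mtr B) (mtr A).
Proof. destruct A, B; unfold mmul, mtr; cbn [a11 a12 a21 a22]; f_equal; ring. Qed.
Lemma mdet_mul A B : mdet (mmul A B) = mdet A * mdet B.
Proof. destruct A, B; unfold mmul, mdet; cbn [a11 a12 a21 a22]; ring. Qed.
Lemma ML_swap l : ML (swap l) = mtr (ML l).
Proof. destruct l; reflexivity. Qed.

Lemma seg_app f : forall n1 n2 p,
  seg f p (n1 + n2) = mmul (seg f p n1) (seg f (p + Z.of_nat n1) n2).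
Proof.
  induction n1; intros n2 p.
  - simpl. rewrite mmul_id_l, Z.add_0_r. reflexivity.
  - simpl (S n1 + n2)%nat. simpl seg. rewrite IHn1, mmul_assoc.
    replace (p + 1 + Z.of_nat n1) with (p + Z.of_nat (S n1)) by lia. reflexivity.
Qed.

Lemma seg_snoc f n p : seg f p (S n) = mmul (seg f p n) (ML (f (p + Z.of_nat n))).
Proof.
  replace (S n) with (n + 1)%nat by lia. rewrite seg_app. simpl. rewrite mmul_id_r. reflexivity.
Qed.

Lemma seg_det f : forall n p, mdet (seg f p n) = 1.
Proof.
  induction n; intros p; simpl. reflexivity.
  rewrite mdet_mul, IHn. destruct (f p); reflexivity.
Qed.

Lemma seg_refl f c d :
  (forall r : nat, f (c - 1 - Z.of_nat r) = swap (f (d + Z.of_nat r))) ->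
  forall m, seg f (c - Z.of_nat m) m = mtr (seg f d m).
Proof.
  intros H. induction m.
  - simpl. reflexivity.
  - rewrite (seg_snoc f m d), mtr_mul, <- ML_swap, <- H.
    change (seg f (c - Z.of_nat (S m)) (S m)) with (mmul (ML (f (c - Z.of_nat (S m)))) (seg f (c - Z.of_nat (S m) + 1) m)).
    replace (c - Z.of_nat (S m) + 1) with (c - Z.of_nat m) by lia.
    replace (c - 1 - Z.of_nat m) with (c - Z.of_nat (S m)) by lia.
    rewrite IHm. reflexivity.
Qed.

Lemma seg_constX f p : forall n, (forall i : nat, (i < n)%nat -> f (p + Z.of_nat i) = X) ->
  seg f p n = Mat 1 (Z.of_nat n) 0 1.
Proof.
  induction n; intros H. reflexivity.
  rewrite seg_snoc, IHn by (intros; apply H; lia). rewrite H by lia.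
  unfold mmul; cbn [a11 a12 a21 a22 ML]; f_equal; lia.
Qed.

Lemma seg_constY f p : forall n, (forall i : nat, (i < n)%nat -> f (p + Z.of_nat i) = Y) ->
  seg f p n = Mat 1 0 (Z.of_nat n) 1.
Proof.
  induction n; intros H. reflexivity.
  rewrite seg_snoc, IHn by (intros; apply H; lia). rewrite H by lia.
  unfold mmul; cbn [a11 a12 a21 a22 ML]; f_equal; lia.
Qed.

Lemma path_succ f i : path f (i + 1) = padd (path f i) (step (f i)).
Proof.
  unfold path.
  destruct (Z_le_gt_dec 0 i) as [Hi|Hi].
  - rewrite (proj2 (Z.leb_le 0 (i+1))) by lia. rewrite (proj2 (Z.leb_le 0 i)) by lia.
    replace (Z.to_nat (i + 1)) with (S (Z.to_nat i)) by lia. simpl.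
    rewrite Z2Nat.id by lia. reflexivity.
  - rewrite (proj2 (Z.leb_gt 0 i)) by lia.
    replace (Z.to_nat (- i)) with (S (Z.to_nat (- (i+1)))) by lia. simpl.
    replace (- Z.of_nat (Z.to_nat (- (i + 1))) - 1) with i by lia.
    destruct (Z.leb_spec 0 (i+1)).
    + replace (i + 1) with 0 by lia. simpl.
      destruct (step (f i)); unfold padd, psub; simpl; f_equal; ring.
    + destruct (neg_path f (Z.to_nat (- (i + 1)))), (step (f i)); unfold padd, psub; simpl; f_equal; ring.
Qed.

Lemma path_X f p : f p = X -> path f (p + 1) = (fst (path f p) + 1, snd (path f p)).
Proof. intros H. rewrite path_succ, H. unfold padd. simpl. f_equal; ring. Qed.
Lemma path_Y f p : f p = Y -> path f (p + 1) = (fst (path f p), snd (path f p) + 1).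
Proof. intros H. rewrite path_succ, H. unfold padd. simpl. f_equal; ring. Qed.

Lemma path_constX f p : forall n, (forall i : nat, (i < n)%nat -> f (p + Z.of_nat i) = X) ->
  path f (p + Z.of_nat n) = (fst (path f p) + Z.of_nat n, snd (path f p)).
Proof.
  induction n; intros H.
  - rewrite Z.add_0_r. destruct (path f p); simpl; f_equal; ring.
  - replace (p + Z.of_nat (S n)) with (p + Z.of_nat n + 1) by lia.
    rewrite path_X by (apply H; lia). rewrite IHn by (intros; apply H; lia). simpl. f_equal; lia.
Qed.

Lemma path_constY f p : forall n, (forall i : nat, (i < n)%nat -> f (p + Z.of_nat i) = Y) ->
  path f (p + Z.of_nat n) = (fst (path f p), snd (path f p) + Z.of_nat n).
Proof.
  induction n; intros H.
  - rewrite Z.add_0_r. destruct (path f p); simpl; f_equal; ring.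
  - replace (p + Z.of_nat (S n)) with (p + Z.of_nat n + 1) by lia.
    rewrite path_Y by (apply H; lia). rewrite IHn by (intros; apply H; lia). simpl. f_equal; lia.
Qed.

Lemma path_refl f c d :
  (forall r : nat, f (c - 1 - Z.of_nat r) = swap (f (d + Z.of_nat r))) ->
  forall m : nat, snd (path f (c - Z.of_nat m)) = snd (path f c) - (fst (path f (d + Z.of_nat m)) - fst (path f d)).
Proof.
  intros H. induction m.
  - rewrite Z.sub_0_r, Z.add_0_r. ring.
  - assert (E1 := path_succ f (c - Z.of_nat (S m))).
    replace (c - Z.of_nat (S m) + 1) with (c - Z.of_nat m) in E1 by lia.
    assert (E2 := path_succ f (d + Z.of_nat m)).
    replace (d + Z.of_nat m + 1) with (d + Z.of_nat (S m)) in E2 by lia.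
    replace (c - Z.of_nat (S m)) with (c - 1 - Z.of_nat m) in E1 by lia.
    rewrite H in E1.
    replace (c - Z.of_nat (S m)) with (c - 1 - Z.of_nat m) by lia.
    rewrite E2. rewrite E1 in IHm. unfold padd in *. simpl in *.
    destruct (f (d + Z.of_nat m)); simpl in *; lia.
Qed.

Lemma tpos t : SL2_tiling t -> forall P, (t P > 0)%nat.
Proof.
  intros H [a b]. specialize (H a (b - 1)). replace (b - 1 + 1) with b in H by ring.
  destruct (t (a, b)); simpl in H; lia.
Qed.

Definition pt (f : frontier) (p q : Z) : Z * Z := (fst (path f q), snd (path f p)).

Lemma tile f t : SL2_tiling t -> extends t f ->
  forall n p, Z.of_nat (t (pt f p (p + Z.of_nat n))) = a22 (seg f p n).
Proof.
  intros HS HE.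
  assert (forall N n p, (n <= N)%nat -> Z.of_nat (t (pt f p (p + Z.of_nat n))) = a22 (seg f p n)).
  2:{ intros n p. apply (H n). lia. }
  induction N; intros n p Hn.
  - assert (n = 0%nat) by lia. subst. unfold pt. rewrite Z.add_0_r, <- surjective_pairing, HE. reflexivity.
  - destruct n as [|n1].
    + unfold pt. rewrite Z.add_0_r, <- surjective_pairing, HE. reflexivity.
    + destruct (f p) eqn:Fp.
      *
        assert (IH := IHN n1 (p + 1) ltac:(lia)).
        unfold pt in *. rewrite path_X in IH by exact Fp. cbn [fst snd] in IH.
        replace (p + 1 + Z.of_nat n1) with (p + Z.of_nat (S n1)) in IH by lia.
        rewrite IH. change (seg f p (S n1)) with (mmul (ML (f p)) (seg f (p+1) n1)).
        rewrite Fp. unfold mmul. cbn [a11 a12 a21 a22 ML]. ring.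
      * destruct (f (p + Z.of_nat n1)) eqn:Fq.
        -- destruct n1 as [|n2].
           { rewrite Z.add_0_r, Fp in Fq. discriminate. }
           assert (IH1 := IHN n2 (p + 1) ltac:(lia)).
           assert (IH2 := IHN (S n2) p ltac:(lia)).
           assert (IH3 := IHN (S n2) (p + 1) ltac:(lia)).
           assert (HS' := HS (fst (path f (p + Z.of_nat (S n2)))) (snd (path f p))).
           unfold pt in *.
           rewrite path_Y in IH1, IH3 by exact Fp. cbn [fst snd] in IH1, IH3.
           replace (p + 1 + Z.of_nat n2) with (p + Z.of_nat (S n2)) in IH1 by lia.
           replace (p + 1 + Z.of_nat (S n2)) with (p + Z.of_nat (S n2) + 1) in IH3 by lia.
           rewrite path_X in IH3 by exact Fq. cbn [fst snd] in IH3.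
           replace (p + Z.of_nat (S (S n2))) with (p + Z.of_nat (S n2) + 1) by lia.
           rewrite path_X by exact Fq. cbn [fst snd].
           rewrite seg_snoc in IH3. replace (p + 1 + Z.of_nat n2) with (p + Z.of_nat (S n2)) in IH3 by lia.
           rewrite Fq in IH3.
           change (seg f p (S n2)) with (mmul (ML (f p)) (seg f (p+1) n2)) in IH2. rewrite Fp in IH2.
           change (seg f p (S (S n2))) with (mmul (ML (f p)) (seg f (p+1) (S n2))). rewrite Fp, seg_snoc.
           replace (p + 1 + Z.of_nat n2) with (p + Z.of_nat (S n2)) by lia. rewrite Fq.
           assert (Hd := seg_det f n2 (p + 1)).
           assert (Hp := tpos t HS (fst (path f (p + Z.of_nat (S n2))), snd (path f p) + 1)).
           destruct (seg f (p + 1) n2) as [w1 w2 w3 w4].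
           unfold mmul, mdet in *; cbn [a11 a12 a21 a22 ML] in *.
           apply (f_equal Z.of_nat) in HS'. rewrite Nat2Z.inj_mul, Nat2Z.inj_add, Nat2Z.inj_mul in HS'.
           rewrite IH1, IH2, IH3 in HS'.
           assert (w4 > 0) by (rewrite <- IH1; lia).
           set (T := Z.of_nat (t (fst (path f (p + Z.of_nat (S n2))) + 1, snd (path f p)))) in *.
           assert (w4 * (T - (w1 + w2 + w3 + w4)) = 0) by nia.
           apply Z.mul_eq_0 in H0. lia.
        -- assert (IH := IHN n1 p ltac:(lia)).
           unfold pt in *.
           replace (p + Z.of_nat (S n1)) with (p + Z.of_nat n1 + 1) by lia.
           rewrite path_Y by exact Fq. cbn [fst snd]. rewrite IH, seg_snoc, Fq. unfold mmul. cbn [a11 a12 a21 a22 ML]. ring.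
Qed.

Lemma tile' f t : SL2_tiling t -> extends t f ->
  forall p n P, P = pt f p (p + Z.of_nat n) -> Z.of_nat (t P) = a22 (seg f p n).
Proof. intros HS HE p n P ->. apply tile; auto. Qed.

Lemma exX f : admissible f -> forall S, exists i, S <= i /\ f i = X.
Proof.
  intros [Hr _] S. destruct (classic (exists i, S <= i /\ f i = X)) as [H|H]; auto.
  exfalso. apply Hr. exists S. intros i Hi.
  assert (forall j, S <= j -> f j = Y).
  { intros j Hj. destruct (f j) eqn:E; auto. exfalso. apply H. eauto. }
  rewrite !H0; auto. lia.
Qed.

Lemma firstX f : forall N S, f (S + Z.of_nat N) = X ->
  exists m, f (S + Z.of_nat m) = X /\ forall i, (i < m)%nat -> f (S + Z.of_nat i) = Y.
Proof.
  induction N; intros S H.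
  - exists 0%nat. split; auto. intros; lia.
  - destruct (f S) eqn:E.
    + exists 0%nat. rewrite Z.add_0_r. split; auto. intros; lia.
    + destruct (IHN (S + 1)) as [m [H1 H2]].
      { replace (S + 1 + Z.of_nat N) with (S + Z.of_nat (Datatypes.S N)) by lia. exact H. }
      exists (Datatypes.S m). split.
      * replace (S + Z.of_nat (Datatypes.S m)) with (S + 1 + Z.of_nat m) by lia. exact H1.
      * intros i Hi. destruct i. { rewrite Z.add_0_r. exact E. }
        replace (S + Z.of_nat (Datatypes.S i)) with (S + 1 + Z.of_nat i) by lia. apply H2. lia.
Qed.

Lemma firstX' f : admissible f -> forall S,
  exists m, f (S + Z.of_nat m) = X /\ forall i, (i < m)%nat -> f (S + Z.of_nat i) = Y.
Proof.
  intros Ha S. destruct (exX f Ha S) as [i [Hi Fi]].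
  apply (firstX f (Z.to_nat (i - S))). rewrite Z2Nat.id by lia.
  replace (S + (i - S)) with i by ring. exact Fi.
Qed.

Lemma nthX f : admissible f -> forall n S, exists m : nat,
  f (S + Z.of_nat m) = X /\ fst (path f (S + Z.of_nat m)) = fst (path f S) + Z.of_nat n.
Proof.
  intros Ha. induction n; intros S.
  - destruct (firstX' f Ha S) as [m [H1 H2]]. exists m. split; auto.
    rewrite path_constY by exact H2. simpl. ring.
  - destruct (IHn S) as [m0 [H1 H2]].
    destruct (firstX' f Ha (S + Z.of_nat m0 + 1)) as [m1 [H3 H4]].
    exists (m0 + 1 + m1)%nat.
    replace (S + Z.of_nat (m0 + 1 + m1)) with (S + Z.of_nat m0 + 1 + Z.of_nat m1) by lia.
    split; auto.
    rewrite path_constY by exact H4. simpl. rewrite path_X by exact H1. simpl. lia.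
Qed.

Lemma lcat_app (s : lword) u v m : lcat s (u ++ v) m = lcat (lcat s u) v m.
Proof.
  unfold lcat. rewrite length_app.
  destruct (Nat.ltb_spec m (length v)); destruct (Nat.ltb_spec m (length u + length v)); try lia.
  - rewrite app_nth2 by lia. f_equal. lia.
  - destruct (Nat.ltb_spec (m - length v) (length u)); try lia.
    rewrite app_nth1 by lia. f_equal. lia.
  - destruct (Nat.ltb_spec (m - length v) (length u)); try lia. f_equal. lia.
Qed.

Lemma local_rel t : SL2_tiling t -> forall x y P1 P2 P3 P4,
  P1 = (x, y + 1) -> P2 = (x + 1, y) -> P3 = (x, y) -> P4 = (x + 1, y + 1) ->
  (t P1 * t P2 = 1 + t P3 * t P4)%nat.
Proof. intros H x y P1 P2 P3 P4 -> -> -> ->. apply H. Qed.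

Theorem lemma3 (h h' : nat) (w : list letter) (s : rword) (s' : lword)
  (t : Z * Z -> nat) :
  (forall m, tr_r s m = lcat s' (X :: repeat Y h' ++ X :: w) m) ->
  (forall m, tr_l s' m = rcat (w ++ Y :: repeat X h ++ [Y]) s m) ->
  let f := join (lcat s' (X :: repeat Y h' ++ [X]))
                (rcat (w ++ Y :: repeat X h ++ [Y]) s) in
  admissible f -> SL2_tiling t -> extends t f ->
  let k := length w in
  let P (j : nat) := path f (Z.of_nat j) in
  let b (j n : nat) := t (padd (P j) (Z.of_nat n, - Z.of_nat n)) in
  let I := path f (Z.of_nat k + Z.of_nat h + 1) in
  let I' := path f (- Z.of_nat h' - 1) in
  let J := padd I (0, -1) in
  let K := padd I (0, -2) in
  let J' := padd I' (1, 0) in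
  let K' := padd I' (2, 0) in
  let i_ (n : nat) := t (padd I (Z.of_nat n, 0)) in
  let i'_ (n : nat) := t (padd I' (0, - Z.of_nat n)) in
  let j_ (n : nat) := t (padd J (Z.of_nat n, - Z.of_nat n)) in
  let k_ (n : nat) := t (padd K (Z.of_nat n, - Z.of_nat n)) in
  let j'_ (n : nat) := t (padd J' (Z.of_nat n, - Z.of_nat n)) in
  let k'_ (n : nat) := t (padd K' (Z.of_nat n, - Z.of_nat n)) in
  forall n : nat,
    (j_ n = (h + 1) * (i_ n * i_ n))%nat /\
    (k_ n + 1 = (h + 1) * i_ n * i_ (n + 1))%nat /\
    (j'_ n = (h' + 1) * (i'_ n * i'_ n))%nat /\
    (k'_ n + 1 = (h' + 1) * i'_ n * i'_ (n + 1))%nat /\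
    (forall j : nat, (1 <= j <= k - 1)%nat ->
       (b j n * b j (n + 1) = 1 +
          match nth (j - 1) w X, nth j w X with
          | X, X => b (j - 1) (n + 1) * b (j + 1) n
          | X, Y => b (j - 1) (n + 1) * b (j + 1) (n + 1)
          | Y, X => b (j - 1) n * b (j + 1) n
          | Y, Y => b (j - 1) n * b (j + 1) (n + 1)
          end)%nat).
Proof.
  intros H1 H2 f Hadm HS HE k P b I I' J K J' K' i_ i'_ j_ k_ j'_ k'_ n.
  subst P b I I' J K J' K' i_ i'_ j_ k_ j'_ k'_.
  set (L := lcat s' (X :: repeat Y h' ++ [X])) in *.
  set (R := rcat (w ++ Y :: repeat X h ++ [Y]) s) in *.
  assert (Fp : forall r : nat, f (Z.of_nat r) = R r).
  { intros r. unfold f, join. destruct (Z.ltb_spec (Z.of_nat r) 0); [lia|]. rewrite Nat2Z.id. reflexivity. }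
  assert (Fn : forall r : nat, f (-1 - Z.of_nat r) = L r).
  { intros r. unfold f, join. destruct (Z.ltb_spec (-1 - Z.of_nat r) 0); [|lia].
    f_equal. lia. }
  assert (Rlen : length (w ++ Y :: repeat X h ++ [Y]) = (k + h + 2)%nat).
  { rewrite length_app. simpl. rewrite length_app, repeat_length. simpl. subst k. lia. }
  assert (Llen : length (X :: repeat Y h' ++ [X]) = (h' + 2)%nat).
  { simpl. rewrite length_app, repeat_length. simpl. lia. }
  assert (Rw : forall r, (r < k)%nat -> R r = nth r w X).
  { intros r Hr. unfold R, rcat. rewrite Rlen. destruct (Nat.ltb_spec r (k+h+2)); [|lia].
    rewrite app_nth1 by (subst k; lia). reflexivity. }
  assert (Rk : R k = Y).
  { unfold R, rcat. rewrite Rlen. destruct (Nat.ltb_spec k (k+h+2)); [|lia].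
    rewrite app_nth2 by (subst k; lia). subst k. rewrite Nat.sub_diag. reflexivity. }
  assert (Rh : forall i, (i < h)%nat -> R (k + 1 + i)%nat = X).
  { intros i Hi. unfold R, rcat. rewrite Rlen. destruct (Nat.ltb_spec (k+1+i) (k+h+2)); [|lia].
    rewrite app_nth2 by (subst k; lia). replace (k + 1 + i - length w)%nat with (S i) by (subst k; lia).
    simpl. rewrite app_nth1 by (rewrite repeat_length; lia). apply nth_repeat. }
  assert (Rkh : R (k + h + 1)%nat = Y).
  { unfold R, rcat. rewrite Rlen. destruct (Nat.ltb_spec (k+h+1) (k+h+2)); [|lia].
    rewrite app_nth2 by (subst k; lia). replace (k + h + 1 - length w)%nat with (S h) by (subst k; lia).
    simpl. rewrite app_nth2 by (rewrite repeat_length; lia). rewrite repeat_length, Nat.sub_diag. reflexivity. }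
  assert (Rs : forall r, R (k + h + 2 + r)%nat = s r).
  { intros r. unfold R, rcat. rewrite Rlen. destruct (Nat.ltb_spec (k+h+2+r) (k+h+2)); [lia|].
    f_equal. lia. }
  assert (L0 : L 0%nat = X).
  { unfold L, lcat. rewrite Llen. destruct (Nat.ltb_spec 0 (h'+2)); [|lia].
    replace (h' + 2 - 1 - 0)%nat with (S h') by lia. simpl.
    rewrite app_nth2 by (rewrite repeat_length; lia).
    rewrite repeat_length, Nat.sub_diag. reflexivity. }
  assert (Lh : forall i, (1 <= i <= h')%nat -> L i = Y).
  { intros i Hi. unfold L, lcat. rewrite Llen. destruct (Nat.ltb_spec i (h'+2)); [|lia].
    replace (h' + 2 - 1 - i)%nat with (S (h' - i)) by lia. simpl.
    rewrite app_nth1 by (rewrite repeat_length; lia). apply nth_repeat_lt. lia. }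
  assert (Lh2 : L (h' + 1)%nat = X).
  { unfold L, lcat. rewrite Llen. destruct (Nat.ltb_spec (h'+1) (h'+2)); [|lia].
    replace (h' + 2 - 1 - (h'+1))%nat with 0%nat by lia. reflexivity. }
  assert (Ls : forall r, L (h' + 2 + r)%nat = s' r).
  { intros r. unfold L, lcat. rewrite Llen. destruct (Nat.ltb_spec (h'+2+r) (h'+2)); [lia|].
    f_equal. lia. }
  assert (Ref1 : forall r : nat, f (Z.of_nat k - 1 - Z.of_nat r) = swap (f (Z.of_nat k + Z.of_nat h + 2 + Z.of_nat r))).
  { intros r. replace (Z.of_nat k + Z.of_nat h + 2 + Z.of_nat r) with (Z.of_nat (k + h + 2 + r)) by lia.
    rewrite Fp, Rs. change (swap (s r)) with (tr_r s r). rewrite H1.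
    replace (X :: repeat Y h' ++ X :: w) with ((X :: repeat Y h' ++ [X]) ++ w)
      by (simpl; rewrite <- app_assoc; reflexivity).
    rewrite lcat_app. fold L. unfold lcat at 1. fold k.
    destruct (Nat.ltb_spec r k).
    - replace (Z.of_nat k - 1 - Z.of_nat r) with (Z.of_nat (k - 1 - r)) by lia.
      rewrite Fp, Rw by lia. reflexivity.
    - replace (Z.of_nat k - 1 - Z.of_nat r) with (-1 - Z.of_nat (r - k)) by lia.
      rewrite Fn. reflexivity. }
  assert (Ref2 : forall r : nat, f (- Z.of_nat h' - 2 - 1 - Z.of_nat r) = swap (f (0 + Z.of_nat r))).
  { intros r. replace (- Z.of_nat h' - 2 - 1 - Z.of_nat r) with (-1 - Z.of_nat (h' + 2 + r)) by lia.
    rewrite Fn, Ls, Z.add_0_l, Fp. rewrite <- H2. unfold tr_l. destruct (s' r); reflexivity. }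
  assert (Fw : forall j, (j < k)%nat -> f (Z.of_nat j) = nth j w X).
  { intros j Hj. rewrite Fp, Rw; auto. }
  assert (Fk : f (Z.of_nat k) = Y) by (rewrite Fp; exact Rk).
  assert (FhX : forall i : nat, (i < h)%nat -> f (Z.of_nat k + 1 + Z.of_nat i) = X).
  { intros i Hi. replace (Z.of_nat k + 1 + Z.of_nat i) with (Z.of_nat (k + 1 + i)) by lia.
    rewrite Fp. auto. }
  assert (Fkh : f (Z.of_nat k + Z.of_nat h + 1) = Y).
  { replace (Z.of_nat k + Z.of_nat h + 1) with (Z.of_nat (k + h + 1)) by lia. rewrite Fp. auto. }
  assert (Gm1 : f (-1) = X).
  { replace (-1) with (-1 - Z.of_nat 0) by lia. rewrite Fn. auto. }
  assert (GhY : forall i : nat, (i < h')%nat -> f (- Z.of_nat h' - 1 + Z.of_nat i) = Y).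
  { intros i Hi. replace (- Z.of_nat h' - 1 + Z.of_nat i) with (-1 - Z.of_nat (h' - i)) by lia.
    rewrite Fn. apply Lh. lia. }
  assert (Gc : f (- Z.of_nat h' - 2) = X).
  { replace (- Z.of_nat h' - 2) with (-1 - Z.of_nat (h' + 1)) by lia. rewrite Fn. auto. }
  clearbody f. clear Fp Fn Rw Rk Rh Rkh Rs L0 Lh Lh2 Ls Rlen Llen H1 H2. clearbody k. clear L R.
  cbv beta.
  destruct (path f (Z.of_nat k)) as [xk yk] eqn:Ck.
  assert (C1 : path f (Z.of_nat k + 1) = (xk, yk + 1)) by (rewrite path_Y, Ck by exact Fk; reflexivity).
  assert (C2 : path f (Z.of_nat k + 1 + Z.of_nat h) = (xk + Z.of_nat h, yk + 1))
    by (rewrite path_constX, C1 by exact FhX; reflexivity).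
  assert (CI : path f (Z.of_nat k + Z.of_nat h + 1) = (xk + Z.of_nat h, yk + 1))
    by (rewrite <- C2; f_equal; lia).
  assert (CQ : path f (Z.of_nat k + Z.of_nat h + 2) = (xk + Z.of_nat h, yk + 2)).
  { replace (Z.of_nat k + Z.of_nat h + 2) with (Z.of_nat k + Z.of_nat h + 1 + 1) by lia.
    rewrite path_Y, CI by exact Fkh. simpl. f_equal; lia. }
  assert (Nm : seg f (Z.of_nat k) (h + 2) = Mat (1 + Z.of_nat h) (Z.of_nat h) (Z.of_nat h + 2) (Z.of_nat h + 1)).
  { replace (h + 2)%nat with (1 + (h + 1))%nat by lia. rewrite seg_app, seg_app.
    rewrite seg_constX with (n := h) by (intros; replace (Z.of_nat k + Z.of_nat 1 + Z.of_nat i) with (Z.of_nat k + 1 + Z.of_nat i) by lia; auto).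
    simpl seg. rewrite Fk. replace (Z.of_nat k + 1 + Z.of_nat h) with (Z.of_nat k + Z.of_nat h + 1) by lia.
    rewrite Fkh. unfold mmul, mid; cbn [a11 a12 a21 a22 ML]. f_equal; lia. }
  rewrite CI. 
  destruct (nthX f Hadm n (Z.of_nat k + Z.of_nat h + 2)) as [m [Fm Cm]].
  rewrite CQ in Cm. cbn [fst] in Cm.
  assert (Cm' : fst (path f (Z.of_nat k + Z.of_nat h + 2 + Z.of_nat (S m))) = xk + Z.of_nat h + Z.of_nat n + 1).
  { replace (Z.of_nat k + Z.of_nat h + 2 + Z.of_nat (S m)) with (Z.of_nat k + Z.of_nat h + 2 + Z.of_nat m + 1) by lia.
    rewrite path_X by exact Fm. simpl. lia. }
  assert (Y1 : snd (path f (Z.of_nat k - Z.of_nat m)) = yk - Z.of_nat n).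
  { rewrite (path_refl f _ _ Ref1 m), Ck, CQ, Cm. simpl. lia. }
  assert (Y2 : snd (path f (Z.of_nat k - Z.of_nat (S m))) = yk - Z.of_nat n - 1).
  { rewrite (path_refl f _ _ Ref1 (S m)), Ck, CQ, Cm'. simpl. lia. }
  set (A := seg f (Z.of_nat k + Z.of_nat h + 2) m).
  assert (HA' : seg f (Z.of_nat k + Z.of_nat h + 2) (S m) = mmul A (ML X)) by (rewrite seg_snoc, Fm; reflexivity).
  assert (Ei0 : Z.of_nat (t (padd (xk + Z.of_nat h, yk + 1) (Z.of_nat n, 0))) = a22 (mmul (ML Y) A)).
  { rewrite (tile' f t HS HE (Z.of_nat k + Z.of_nat h + 1) (1 + m)).
    - rewrite seg_app. change (seg f ?p 1) with (mmul (ML (f p)) mid).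
      rewrite Fkh, mmul_id_r.
      replace (Z.of_nat k + Z.of_nat h + 1 + Z.of_nat 1) with (Z.of_nat k + Z.of_nat h + 2) by lia.
      reflexivity.
    - unfold pt, padd. rewrite CI. cbn [fst snd].
      replace (Z.of_nat k + Z.of_nat h + 1 + Z.of_nat (1 + m)) with (Z.of_nat k + Z.of_nat h + 2 + Z.of_nat m) by lia.
      rewrite Cm. f_equal; lia. }
  assert (Ei1 : Z.of_nat (t (padd (xk + Z.of_nat h, yk + 1) (Z.of_nat (n + 1), 0))) = a22 (mmul (ML Y) (mmul A (ML X)))).
  { rewrite (tile' f t HS HE (Z.of_nat k + Z.of_nat h + 1) (1 + S m)).
    - rewrite seg_app. change (seg f ?p 1) with (mmul (ML (f p)) mid).
      rewrite Fkh, mmul_id_r.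
      replace (Z.of_nat k + Z.of_nat h + 1 + Z.of_nat 1) with (Z.of_nat k + Z.of_nat h + 2) by lia.
      rewrite HA'. reflexivity.
    - unfold pt, padd. rewrite CI. cbn [fst snd].
      replace (Z.of_nat k + Z.of_nat h + 1 + Z.of_nat (1 + S m)) with (Z.of_nat k + Z.of_nat h + 2 + Z.of_nat (S m)) by lia.
      rewrite Cm'. f_equal; lia. }
  assert (Ej : Z.of_nat (t (padd (padd (xk + Z.of_nat h, yk + 1) (0, -1)) (Z.of_nat n, - Z.of_nat n)))
               = a22 (mmul (mtr A) (mmul (seg f (Z.of_nat k) (h + 2)) A))).
  { rewrite (tile' f t HS HE (Z.of_nat k - Z.of_nat m) (m + (h + 2 + m))).
    - rewrite seg_app, seg_app, (seg_refl f _ _ Ref1 m).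
      replace (Z.of_nat k - Z.of_nat m + Z.of_nat m) with (Z.of_nat k) by lia.
      replace (Z.of_nat k + Z.of_nat (h + 2)) with (Z.of_nat k + Z.of_nat h + 2) by lia.
      reflexivity.
    - unfold pt, padd. cbn [fst snd].
      replace (Z.of_nat k - Z.of_nat m + Z.of_nat (m + (h + 2 + m))) with (Z.of_nat k + Z.of_nat h + 2 + Z.of_nat m) by lia.
      rewrite Cm, Y1. f_equal; lia. }
  assert (Ek : Z.of_nat (t (padd (padd (xk + Z.of_nat h, yk + 1) (0, -2)) (Z.of_nat n, - Z.of_nat n)))
               = a22 (mmul (mtr (mmul A (ML X))) (mmul (seg f (Z.of_nat k) (h + 2)) A))).
  { rewrite (tile' f t HS HE (Z.of_nat k - Z.of_nat (S m)) (S m + (h + 2 + m))).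
    - rewrite seg_app, seg_app, (seg_refl f _ _ Ref1 (S m)), HA'.
      replace (Z.of_nat k - Z.of_nat (S m) + Z.of_nat (S m)) with (Z.of_nat k) by lia.
      replace (Z.of_nat k + Z.of_nat (h + 2)) with (Z.of_nat k + Z.of_nat h + 2) by lia.
      reflexivity.
    - unfold pt, padd. cbn [fst snd].
      replace (Z.of_nat k - Z.of_nat (S m) + Z.of_nat (S m + (h + 2 + m))) with (Z.of_nat k + Z.of_nat h + 2 + Z.of_nat m) by lia.
      rewrite Cm, Y2. f_equal; lia. }
  rewrite Nm in Ej, Ek.
  assert (HdA : mdet A = 1) by apply seg_det.
  clearbody A. destruct A as [a1 a2 a3 a4]. unfold mmul, mtr, mdet in *. cbn [a11 a12 a21 a22 ML] in *.
  set (TI := t (padd (xk + Z.of_nat h, yk + 1) (Z.of_nat n, 0))) in *.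
  set (TI1 := t (padd (xk + Z.of_nat h, yk + 1) (Z.of_nat (n + 1), 0))) in *.
  set (TJ := t (padd (padd (xk + Z.of_nat h, yk + 1) (0, -1)) (Z.of_nat n, - Z.of_nat n))) in *.
  set (TK := t (padd (padd (xk + Z.of_nat h, yk + 1) (0, -2)) (Z.of_nat n, - Z.of_nat n))) in *.
  split; [| split].
  { apply Nat2Z.inj. rewrite Ej, !Nat2Z.inj_mul, Nat2Z.inj_add, Ei0. simpl (Z.of_nat 1). ring. }
  { apply Nat2Z.inj. rewrite !Nat2Z.inj_add, !Nat2Z.inj_mul, Nat2Z.inj_add, Ek, Ei0, Ei1. simpl (Z.of_nat 1).
    nia. }
  clear TI TI1 TJ TK Ei0 Ei1 Ej Ek a1 a2 a3 a4 HdA HA' Y1 Y2 Cm Cm' Fm m.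
  destruct (path f (- Z.of_nat h' - 2)) as [xc yc] eqn:Cc.
  assert (CI' : path f (- Z.of_nat h' - 1) = (xc + 1, yc)).
  { replace (- Z.of_nat h' - 1) with (- Z.of_nat h' - 2 + 1) by lia.
    rewrite path_X, Cc by exact Gc. reflexivity. }
  assert (C2' : path f (- Z.of_nat h' - 1 + Z.of_nat h') = (xc + 1, yc + Z.of_nat h'))
    by (rewrite path_constY, CI' by exact GhY; reflexivity).
  assert (C0 : path f 0 = (xc + 2, yc + Z.of_nat h')).
  { replace 0 with (- Z.of_nat h' - 1 + Z.of_nat h' + 1) by lia.
    rewrite path_X, C2'. simpl. f_equal; lia.
    replace (- Z.of_nat h' - 1 + Z.of_nat h') with (-1) by lia. exact Gm1. }
  assert (Nm' : seg f (- Z.of_nat h' - 2) (h' + 2) = Mat (1 + Z.of_nat h') (Z.of_nat h' + 2) (Z.of_nat h') (Z.of_nat h' + 1)).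
  { replace (h' + 2)%nat with (1 + (h' + 1))%nat by lia. rewrite seg_app, seg_app.
    rewrite seg_constY with (n := h') by (intros; replace (- Z.of_nat h' - 2 + Z.of_nat 1 + Z.of_nat i) with (- Z.of_nat h' - 1 + Z.of_nat i) by lia; auto).
    change (seg f ?p 1) with (mmul (ML (f p)) mid). rewrite Gc.
    replace (- Z.of_nat h' - 2 + Z.of_nat 1 + Z.of_nat h') with (-1) by lia.
    rewrite Gm1. unfold mmul, mid; cbn [a11 a12 a21 a22 ML]. f_equal; lia. }
  rewrite CI'.
  destruct (nthX f Hadm n 0) as [m [Fm Cm]].
  rewrite C0 in Cm. cbn [fst] in Cm.
  assert (Cm' : fst (path f (0 + Z.of_nat (S m))) = xc + 2 + Z.of_nat n + 1).
  { replace (0 + Z.of_nat (S m)) with (0 + Z.of_nat m + 1) by lia.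
    rewrite path_X by exact Fm. cbn [fst]. lia. }
  assert (Y1 : snd (path f (- Z.of_nat h' - 2 - Z.of_nat m)) = yc - Z.of_nat n).
  { rewrite (path_refl f _ _ Ref2 m), Cc, C0, Cm. simpl. lia. }
  assert (Y2 : snd (path f (- Z.of_nat h' - 2 - Z.of_nat (S m))) = yc - Z.of_nat n - 1).
  { rewrite (path_refl f _ _ Ref2 (S m)), Cc, C0, Cm'. simpl. lia. }
  set (B := seg f 0 m).
  assert (HB' : seg f 0 (S m) = mmul B (ML X)) by (rewrite seg_snoc, Fm; reflexivity).
  assert (Ei0 : Z.of_nat (t (padd (xc + 1, yc) (0, - Z.of_nat n))) = a22 (mmul (mtr B) (ML X))).
  { rewrite (tile' f t HS HE (- Z.of_nat h' - 2 - Z.of_nat m) (m + 1)).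
    - rewrite seg_app, (seg_refl f _ _ Ref2 m). change (seg f ?p 1) with (mmul (ML (f p)) mid).
      replace (- Z.of_nat h' - 2 - Z.of_nat m + Z.of_nat m) with (- Z.of_nat h' - 2) by lia.
      rewrite Gc, mmul_id_r. reflexivity.
    - unfold pt, padd. cbn [fst snd].
      replace (- Z.of_nat h' - 2 - Z.of_nat m + Z.of_nat (m + 1)) with (- Z.of_nat h' - 1) by lia.
      rewrite CI', Y1. cbn [fst]. f_equal; lia. }
  assert (Ei1 : Z.of_nat (t (padd (xc + 1, yc) (0, - Z.of_nat (n + 1)))) = a22 (mmul (mtr (mmul B (ML X))) (ML X))).
  { rewrite (tile' f t HS HE (- Z.of_nat h' - 2 - Z.of_nat (S m)) (S m + 1)).
    - rewrite seg_app, (seg_refl f _ _ Ref2 (S m)), HB'. change (seg f ?p 1) with (mmul (ML (f p)) mid).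
      replace (- Z.of_nat h' - 2 - Z.of_nat (S m) + Z.of_nat (S m)) with (- Z.of_nat h' - 2) by lia.
      rewrite Gc, mmul_id_r. reflexivity.
    - unfold pt, padd. cbn [fst snd].
      replace (- Z.of_nat h' - 2 - Z.of_nat (S m) + Z.of_nat (S m + 1)) with (- Z.of_nat h' - 1) by lia.
      rewrite CI', Y2. cbn [fst]. f_equal; lia. }
  assert (Ej : Z.of_nat (t (padd (padd (xc + 1, yc) (1, 0)) (Z.of_nat n, - Z.of_nat n)))
               = a22 (mmul (mtr B) (mmul (seg f (- Z.of_nat h' - 2) (h' + 2)) B))).
  { rewrite (tile' f t HS HE (- Z.of_nat h' - 2 - Z.of_nat m) (m + (h' + 2 + m))).
    - rewrite seg_app, seg_app, (seg_refl f _ _ Ref2 m).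
      replace (- Z.of_nat h' - 2 - Z.of_nat m + Z.of_nat m) with (- Z.of_nat h' - 2) by lia.
      replace (- Z.of_nat h' - 2 + Z.of_nat (h' + 2)) with 0 by lia.
      reflexivity.
    - unfold pt, padd. cbn [fst snd].
      replace (- Z.of_nat h' - 2 - Z.of_nat m + Z.of_nat (m + (h' + 2 + m))) with (0 + Z.of_nat m) by lia.
      rewrite Cm, Y1. f_equal; lia. }
  assert (Ek : Z.of_nat (t (padd (padd (xc + 1, yc) (2, 0)) (Z.of_nat n, - Z.of_nat n)))
               = a22 (mmul (mtr B) (mmul (seg f (- Z.of_nat h' - 2) (h' + 2)) (mmul B (ML X))))).
  { rewrite (tile' f t HS HE (- Z.of_nat h' - 2 - Z.of_nat m) (m + (h' + 2 + S m))).
    - rewrite seg_app, seg_app, (seg_refl f _ _ Ref2 m).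
      replace (- Z.of_nat h' - 2 - Z.of_nat m + Z.of_nat m) with (- Z.of_nat h' - 2) by lia.
      replace (- Z.of_nat h' - 2 + Z.of_nat (h' + 2)) with 0 by lia.
      rewrite HB'. reflexivity.
    - unfold pt, padd. cbn [fst snd].
      replace (- Z.of_nat h' - 2 - Z.of_nat m + Z.of_nat (m + (h' + 2 + S m))) with (0 + Z.of_nat (S m)) by lia.
      rewrite Cm', Y1. f_equal; lia. }
  rewrite Nm' in Ej, Ek.
  assert (HdB : mdet B = 1) by apply seg_det.
  clearbody B. destruct B as [a1 a2 a3 a4]. unfold mmul, mtr, mdet in *. cbn [a11 a12 a21 a22 ML] in *.
  set (TI := t (padd (xc + 1, yc) (0, - Z.of_nat n))) in *.
  set (TI1 := t (padd (xc + 1, yc) (0, - Z.of_nat (n + 1)))) in *.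
  set (TJ := t (padd (padd (xc + 1, yc) (1, 0)) (Z.of_nat n, - Z.of_nat n))) in *.
  set (TK := t (padd (padd (xc + 1, yc) (2, 0)) (Z.of_nat n, - Z.of_nat n))) in *.
  split; [| split].
  { apply Nat2Z.inj. rewrite Ej, !Nat2Z.inj_mul, Nat2Z.inj_add, Ei0. simpl (Z.of_nat 1). ring. }
  { apply Nat2Z.inj. rewrite !Nat2Z.inj_add, !Nat2Z.inj_mul, Nat2Z.inj_add, Ek, Ei0, Ei1. simpl (Z.of_nat 1).
    nia. }
  intros j Hj.
  rewrite <- (Fw (j - 1)%nat) by lia. rewrite <- (Fw j) by lia.
  assert (Hm : path f (Z.of_nat j) = padd (path f (Z.of_nat (j - 1))) (step (f (Z.of_nat (j - 1))))).
  { rewrite <- path_succ. f_equal. lia. }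
  assert (Hp : path f (Z.of_nat (j + 1)) = padd (path f (Z.of_nat j)) (step (f (Z.of_nat j)))).
  { rewrite <- path_succ. f_equal. lia. }
  destruct (f (Z.of_nat (j - 1))) eqn:E1, (f (Z.of_nat j)) eqn:E2;
  apply (local_rel t HS (fst (path f (Z.of_nat j)) + Z.of_nat n) (snd (path f (Z.of_nat j)) - Z.of_nat n - 1));
  rewrite ?Hp, Hm; destruct (path f (Z.of_nat (j - 1))) as [x0 y0]; unfold padd; cbn [fst snd step];
  f_equal; lia.
Qed.
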